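(* Let $P\in\{0,1\}^{k\times\ell}$ be a pattern with two rows $r_1\le r_2$ and a column $c$ such that for every $r\in[r_1,r_2]$, $P$ has no 1-entry in row $r$ except possibly $(r,c)$. Suppose moreover $P$ satisfies one of: Type 1: all 1-entries of $P$ above row $r_1$ lie in column $c$ or in row $r_1-1$, and all 1-entries below row $r_2$ lie in column $c$ or in row $r_2+1$; Type 2: all 1-entries above row $r_1$ lie in column $c$ or in row $r_1-1$, and all 1-entries below row $r_2$ lie in $P[(r_2,k]\times[c,\ell]]$; Type 3: all 1-entries above row $r_1$ lie in $P[[1,r_1)\times[c]]$, and all 1-entries below row $r_2$ lie in $P[(r_2,k]\times[c,\ell]]$. Then every 1-entry of $P$ in $[r_1,r_2]\times\{c\}$ is row-bounding.
   Context: All matrices are binary; rows numbered top to bottom, columns left to right; $(i,j)$ is the entry in row $i$, column $j$; $[a,b]=\{a,\dots,b\}$, $[a,b)=[a,b-1]$, $(a,b]=[a+1,b]$, $[n]=[1,n]$; $P[R\times C]$ is the submatrix on rows $R$ and columns $C$. $M\Delta f$ is $M$ with the value of entry $f$ switched. An embedding of $P\in\{0,1\}^{k\times\ell}$ into $M\in\{0,1\}^{m\times n}$ is a map $\phi:[k]\times[\ell]\to[m]\times[n]$ sending 1-entries to 1-entries such that if $e_1=(i_1,j_1)$, $e_2=(i_2,j_2)$ map to $(i_1^*,j_1^* )$, $(i_2^*,j_2^* )$, then $i_1<i_2\Rightarrow i_1^*<i_2^*$ and $j_1<j_2\Rightarrow j_1^*<j_2^*$. $M$ avoids $P$ if no embedding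 exists; $\mathrm{Av}(P)$ is the set of $P$-avoiding matrices. For a 1-entry $e$ of $P$ and $M\in\mathrm{Av}(P)$, a 0-entry $f$ of $M$ is critical for $e$ if some embedding of $P$ into $M\Delta f$ maps $e$ to $f$; a horizontal 0-run (maximal run of consecutive 0-entries in a row) is critical for $e$ if it contains a 0-entry critical for $e$. $e$ is row-bounding if there is a constant $K$ such that for every $M\in\mathrm{Av}(P)$ every row of $M$ contains at most $K$ horizontal 0-runs critical for $e$. *)

(* Defs.v *)
From mathcomp Require Import all_boot all_order all_algebra.
Set Implicit Arguments. Unset Strict Implicit. Unset Printing Implicit Defensive.

(* Binary matrices are 'M[bool]_(m, n); rows/columns are 0-based ordinals
   (row 0 is the top row, column 0 the leftmost column). *)

Definition is_embedding (k l m n : nat) (P : 'M[bool]_(k, l)) (M : 'M[bool]_(m, n))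
  (phi : 'I_k -> 'I_l -> 'I_m * 'I_n) : Prop :=
  [/\ (forall i j, P i j -> M (phi i j).1 (phi i j).2),
      (forall (i1 i2 : 'I_k) (j1 j2 : 'I_l), (i1 < i2)%N -> ((phi i1 j1).1 < (phi i2 j2).1)%N) &
      (forall (i1 i2 : 'I_k) (j1 j2 : 'I_l), (j1 < j2)%N -> ((phi i1 j1).2 < (phi i2 j2).2)%N)].

Definition avoids (k l m n : nat) (P : 'M[bool]_(k, l)) (M : 'M[bool]_(m, n)) : Prop :=
  ~ exists phi, is_embedding P M phi.

Definition switch (m n : nat) (M : 'M[bool]_(m, n)) (f : 'I_m * 'I_n) : 'M[bool]_(m, n) :=
  \matrix_(i, j) (if (i, j) == f then ~~ M i j else M i j).

Definition critical (k l m n : nat) (P : 'M[bool]_(k, l)) (e : 'I_k * 'I_l)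
  (M : 'M[bool]_(m, n)) (f : 'I_m * 'I_n) : Prop :=
  M f.1 f.2 = false /\
  exists phi, is_embedding P (switch M f) phi /\ phi e.1 e.2 = f.

Definition zero_run (m n : nat) (M : 'M[bool]_(m, n)) (i : 'I_m) (a b : 'I_n) : Prop :=
  [/\ (a <= b)%N,
      (forall j : 'I_n, (a <= j <= b)%N -> M i j = false),
      (forall j : 'I_n, j.+1 = a -> M i j = true) &
      (forall j : 'I_n, j = b.+1 :> nat -> M i j = true)].

Definition critical_run (k l m n : nat) (P : 'M[bool]_(k, l)) (e : 'I_k * 'I_l)
  (M : 'M[bool]_(m, n)) (i : 'I_m) (a b : 'I_n) : Prop :=
  zero_run M i a b /\ exists j : 'I_n, (a <= j <= b)%N /\ critical P e M (i, j).

(* e is row-bounding: uniformly bounded number of critical 0-runs (each run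
   identified by its pair (first column, last column)) in every row *)
Definition row_bounding (k l : nat) (P : 'M[bool]_(k, l)) (e : 'I_k * 'I_l) : Prop :=
  exists K : nat, forall (m n : nat) (M : 'M[bool]_(m, n)), avoids P M ->
    forall (i : 'I_m) (S : {set 'I_n * 'I_n}),
      (forall ab, ab \in S -> critical_run P e M i ab.1 ab.2) -> #|S| <= K.

(* Main.v *)
Require Import Defs.
From mathcomp Require Import all_boot all_order all_algebra.
From mathcomp Require Import zify.
From Stdlib Require Import Classical.
Set Implicit Arguments. Unset Strict Implicit.


Definition mono (k l : nat) (R : 'I_k -> 'I_l -> nat) :=
  forall (i1 i2 : 'I_k) (j1 j2 : 'I_l), (i1 < i2)%N -> (R i1 j1 < R i2 j2)%N.

Lemma ex_min_fin (T : finType) (t0 : T) (F : T -> nat) :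
  exists z, forall z', (F z <= F z')%N.
Proof.
case: (@arg_minnP T t0 predT F erefl) => z _ H; exists z => z'; exact: H.
Qed.

Lemma ex_max_fin (T : finType) (t0 : T) (F : T -> nat) :
  exists z, forall z', (F z' <= F z)%N.
Proof.
case: (@arg_maxnP T t0 predT F erefl) => z _ H; exists z => z'; exact: H.
Qed.

Lemma mixG (k l : nat) (R : bool -> 'I_k -> 'I_l -> nat) (c : 'I_l) (u : 'I_k)
  (tau : 'I_l -> bool) : (forall s, mono (R s)) ->
  exists sig : 'I_k -> 'I_l -> bool, (forall q, sig u q = tau q) /\
    mono (fun p q => R (sig p q) p q).
Proof.
move=> Hm.
pose F := fun z : bool * 'I_l => R z.1 u z.2.
have [z1 H1] := ex_min_fin (true, c) F.
have [z2 H2] := ex_max_fin (true, c) F.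
exists (fun p q => if (p < u)%N then z1.1 else if p == u then tau q else z2.1).
split; first by move=> q; rewrite ltnn eqxx.
move=> i1 i2 j1 j2 H12 /=.
have A1 : forall (p : 'I_k) (q : 'I_l), (p < u)%N -> (R z1.1 p q < F z1)%N by move=> p q H; exact: Hm.
have A2 : forall (p : 'I_k) (q : 'I_l), (u < p)%N -> (F z2 < R z2.1 p q)%N by move=> p q H; exact: Hm.
have B : forall s q, (F z1 <= R s u q <= F z2)%N.
  by move=> s q; rewrite (H1 (s, q)) (H2 (s, q)).
case: (ltngtP i1 u) => h1; case: (ltngtP i2 u) => h2.
- exact: Hm.
- have := A1 i1 j1 h1; have := A2 i2 j2 h2; have := B true c.
  move=> /andP[a1 a2] b c0; apply: ltn_trans c0 _; apply: leq_ltn_trans b; exact: leq_trans a1 a2.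
- have e2 : i2 = u by apply: val_inj.
  subst i2; have := A1 i1 j1 h1; have := B (tau j2) j2; move=> /andP[a1 _] b; exact: leq_trans b a1.
- lia.
- exact: Hm.
- lia.
- lia.
- have e1 : i1 = u by apply: val_inj.
  subst i1; have := A2 i2 j2 h2; have := B (tau j1) j1; move=> /andP[_ a2] b; exact: leq_ltn_trans a2 b.
- lia.
Qed.


Lemma emb_one (k l m n : nat) (P : 'M[bool]_(k,l)) (M : 'M[bool]_(m,n))
  (r : 'I_k) (c : 'I_l) (phi : 'I_k -> 'I_l -> 'I_m * 'I_n) (f : 'I_m * 'I_n) :
  is_embedding P (switch M f) phi -> phi r c = f ->
  forall p q, P p q -> (p != r) || (q != c) -> M (phi p q).1 (phi p q).2.
Proof.
case=> H1 H2 H3 Hf p q Hpq Hne.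
have := H1 p q Hpq; rewrite /switch mxE.
have -> : ((phi p q).1, (phi p q).2) == f = false; last by [].
apply/negbTE; rewrite -Hf -surjective_pairing.
case/orP: Hne => Hne.
- case: (ltngtP p r) => h.
  + apply/eqP => E; have := H2 p r q c h; rewrite E ltnn //.
  + apply/eqP => E; have := H2 r p c q h; rewrite E ltnn //.
  + by move: Hne; rewrite (val_inj h) eqxx.
- case: (ltngtP q c) => h.
  + apply/eqP => E; have := H3 p r q c h; rewrite E ltnn //.
  + apply/eqP => E; have := H3 r p c q h; rewrite E ltnn //.
  + by move: Hne; rewrite (val_inj h) eqxx.
Qed.

Lemma combine (k l m n : nat) (P : 'M[bool]_(k,l)) (M : 'M[bool]_(m,n))
  (r : 'I_k) (c : 'I_l) (R : bool -> 'I_k -> 'I_l -> 'I_m * 'I_n) (i : 'I_m)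
  (J : bool -> 'I_n) (x : 'I_n) (sig : 'I_k -> 'I_l -> bool) :
  (forall s, is_embedding P (switch M (i, J s)) (R s)) ->
  (forall s, R s r c = (i, J s)) ->
  M i x -> (J true < x)%N -> (x < J false)%N ->
  (forall q, P r q -> q = c) ->
  (forall p q, p != r -> P p q -> ((q < c)%N -> sig p q) /\ ((c < q)%N -> ~~ sig p q)) ->
  (forall (i1 i2 : 'I_k) (j1 j2 : 'I_l), (i1 < i2)%N -> (i2 < r)%N ->
     ((R (sig i1 j1) i1 j1).1 < (R (sig i2 j2) i2 j2).1)%N) ->
  (forall (i1 i2 : 'I_k) (j1 j2 : 'I_l), (r < i1)%N -> (i1 < i2)%N ->
     ((R (sig i1 j1) i1 j1).1 < (R (sig i2 j2) i2 j2).1)%N) ->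
  exists phi, is_embedding P M phi.
Proof.
move=> Hemb HRe Mx Hax Hxb Hrow Hoc Htop Hbot.
have one : forall s p q, P p q -> (p != r) || (q != c) -> M (R s p q).1 (R s p q).2.
  by move=> s; apply: emb_one (Hemb s) (HRe s).
have rowm : forall s (i1 i2 : 'I_k) (j1 j2 : 'I_l), (i1 < i2)%N -> ((R s i1 j1).1 < (R s i2 j2).1)%N.
  by move=> s; case: (Hemb s).
have colm : forall s (i1 i2 : 'I_k) (j1 j2 : 'I_l), (j1 < j2)%N -> ((R s i1 j1).2 < (R s i2 j2).2)%N.
  by move=> s; case: (Hemb s).
have rowe : forall s, (R s r c).1 = i by move=> s; rewrite HRe.
have cole : forall s, (R s r c).2 = J s by move=> s; rewrite HRe.
(* moving e to x in phi_a *)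
case: (classic (exists (p : 'I_k) (q : 'I_l), (c < q)%N /\ ((R true p q).2 <= x)%N)); last first.
  move=> nFa.
  exists (fun p q => if (p == r) && (q == c) then (i, x) else R true p q).
  split.
  - move=> p q Hpq; case: ifP => [//|/negbT]; rewrite negb_and => h; exact: one.
  - move=> i1 i2 j1 j2 h.
    have E : forall p q, (if (p == r) && (q == c) then (i, x) else R true p q).1 = (R true p q).1.
      by move=> p q; case: ifP => // /andP[/eqP -> /eqP ->]; rewrite rowe.
    rewrite !E; exact: rowm.
  - move=> i1 i2 j1 j2 h.
    case: ifP => [/andP[/eqP e1 /eqP e2]|_]; case: ifP => [/andP[/eqP e3 /eqP e4]|_] /=.
    + subst; by rewrite ltnn in h.
    + subst; rewrite ltnNge; apply/negP => H; apply: nFa; by exists i2, j2.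
    + subst; apply: ltn_trans Hax; rewrite -(cole true); exact: colm.
    + exact: colm.
case=> p0 [q0 [Hq0 Hx0]].
case: (classic (exists (p : 'I_k) (q : 'I_l), (q < c)%N /\ (x <= (R false p q).2)%N)); last first.
  move=> nFb.
  exists (fun p q => if (p == r) && (q == c) then (i, x) else R false p q).
  split.
  - move=> p q Hpq; case: ifP => [//|/negbT]; rewrite negb_and => h; exact: one.
  - move=> i1 i2 j1 j2 h.
    have E : forall p q, (if (p == r) && (q == c) then (i, x) else R false p q).1 = (R false p q).1.
      by move=> p q; case: ifP => // /andP[/eqP -> /eqP ->]; rewrite rowe.
    rewrite !E; exact: rowm.
  - move=> i1 i2 j1 j2 h.
    case: ifP => [/andP[/eqP e1 /eqP e2]|_]; case: ifP => [/andP[/eqP e3 /eqP e4]|_] /=.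
    + subst; by rewrite ltnn in h.
    + subst; apply: ltn_trans Hxb _; rewrite -(cole false); exact: colm.
    + subst; rewrite ltnNge; apply/negP => H; apply: nFb; by exists i1, j1.
    + exact: colm.
case=> p1 [q1 [Hq1 Hx1]].
pose rowpsi := fun (p : 'I_k) (q : 'I_l) => if p == r then i else (R (sig p q) p q).1.
pose colpsi := fun (p : 'I_k) (q : 'I_l) => if (q < c)%N then (R true p q).2
   else if (c < q)%N then (R false p q).2 else if p == r then x else (R (sig p q) p q).2.
exists (fun p q => (rowpsi p q, colpsi p q)).
have Lt : forall (p : 'I_k) (q : 'I_l), (q < c)%N -> ((R true p q).2 < x)%N.
  move=> p q h; apply: ltn_trans Hax; rewrite -(cole true); exact: colm.
have Gt : forall (p : 'I_k) (q : 'I_l), (c < q)%N -> (x < (R false p q).2)%N.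
  move=> p q h; apply: ltn_trans Hxb _; rewrite -(cole false); exact: colm.
have Ca : forall p : 'I_k, ((R true p c).2 < x)%N.
  move=> p; apply: leq_trans _ Hx0; exact: colm.
have Cb : forall p : 'I_k, (x < (R false p c).2)%N.
  move=> p; apply: leq_ltn_trans Hx1 _; exact: colm.
have colc : forall (p : 'I_k) (q : 'I_l), q = c ->
   (forall (p' : 'I_k) (q' : 'I_l), (q' < c)%N -> ((R true p' q').2 < colpsi p q)%N) /\
   (forall (p' : 'I_k) (q' : 'I_l), (c < q')%N -> (colpsi p q < (R false p' q').2)%N).
  move=> p q ->; rewrite /colpsi ltnn; split=> p' q' h.
  - case: ifP => _; first exact: Lt.
    case: (sig p c).
    + exact: colm.
    + apply: ltn_trans (Cb p); exact: Lt.
  - case: ifP => _; first exact: Gt.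
    case: (sig p c).
    + apply: ltn_trans (Ca p) _; exact: Gt.
    + exact: colm.
split.
- move=> p q Hpq /=; rewrite /rowpsi /colpsi.
  case: (eqVneq p r) => [epr|npr].
  + subst p; have eq := Hrow q Hpq; subst q; by rewrite ltnn.
  + have [h1 h2] := Hoc p q npr Hpq.
    case: (ltngtP q c) => hq.
    * rewrite (h1 hq); apply: one => //; by rewrite npr.
    * rewrite (negbTE (h2 hq)); apply: one => //; by rewrite npr.
    * apply: one => //; by rewrite npr.
- move=> i1 i2 j1 j2 h /=; rewrite /rowpsi.
  case: (ltngtP i2 r) => h2.
  + have n1 : i1 != r by rewrite neq_ltn (ltn_trans h h2).
    have n2 : i2 != r by rewrite neq_ltn h2.
    rewrite (negbTE n1) (negbTE n2); exact: Htop.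
  + have n2 : i2 != r by rewrite neq_ltn h2 orbT.
    rewrite (negbTE n2).
    case: (ltngtP i1 r) => h1.
    * have n1 : i1 != r by rewrite neq_ltn h1.
      rewrite (negbTE n1); apply: (@ltn_trans i).
      -- rewrite -(rowe (sig i1 j1)); exact: rowm.
      -- rewrite -(rowe (sig i2 j2)); exact: rowm.
    * have n1 : i1 != r by rewrite neq_ltn h1 orbT.
      rewrite (negbTE n1); exact: Hbot.
    * have -> : i1 == r by apply/eqP/val_inj.
      rewrite -(rowe (sig i2 j2)); apply: rowm; by rewrite -h1.
  + have -> : i2 == r by apply/eqP/val_inj.
    have n1 : i1 != r by apply/eqP => E; move: h; rewrite E h2 ltnn.
    rewrite (negbTE n1) -(rowe (sig i1 j1)); apply: rowm; by rewrite -h2.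
- move=> i1 i2 j1 j2 h /=.
  case: (ltngtP j1 c) => h1.
  + case: (ltngtP j2 c) => h2.
    * rewrite /colpsi h1 h2; exact: colm.
    * have f2 : (j2 < c)%N = false by rewrite ltnNge (ltnW h2).
      rewrite /colpsi h1 f2 h2; apply: ltn_trans (Gt i2 j2 h2); exact: Lt.
    * have [A _] := colc i2 j2 (val_inj h2). rewrite {1}/colpsi h1; exact: A.
  + have h2 : (c < j2)%N := ltn_trans h1 h.
    have f1 : (j1 < c)%N = false by rewrite ltnNge (ltnW h1).
    have f2 : (j2 < c)%N = false by rewrite ltnNge (ltnW h2).
    rewrite /colpsi f1 h1 f2 h2; exact: colm.
  + have h2 : (c < j2)%N by rewrite -h1.
    have f2 : (j2 < c)%N = false by rewrite ltnNge (ltnW h2).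
    have [_ A] := colc i1 j1 (val_inj h1).
    rewrite {2}/colpsi f2 h2; exact: A.
Qed.

Lemma runs_sep (m n : nat) (M : 'M[bool]_(m,n)) (i : 'I_m) (a1 b1 a2 b2 : 'I_n) :
  zero_run M i a1 b1 -> zero_run M i a2 b2 -> (a1, b1) != (a2, b2) ->
  (b1 < a2)%N \/ (b2 < a1)%N.
Proof.
case=> le1 Z1 L1 R1 [le2 Z2 L2 R2] Hne.
case: (ltnP b1 a2) => h1; first by left.
case: (ltnP b2 a1) => h2; first by right.
exfalso; move/negP: Hne; apply; apply/eqP.
have ea : a1 = a2.
  apply: val_inj; case: (ltngtP a1 a2) => // h.
  - have hj : (a2.-1 < n)%N by apply: leq_ltn_trans (leq_pred _) (ltn_ord a2).
    have := L2 (Ordinal hj); rewrite Z1 /=; first by move=> H; have : false by apply: H; lia.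
    apply/andP; split => /=; lia.
  - have hj : (a1.-1 < n)%N by apply: leq_ltn_trans (leq_pred _) (ltn_ord a1).
    have := L1 (Ordinal hj); rewrite Z2 /=; first by move=> H; have : false by apply: H; lia.
    apply/andP; split => /=; lia.
have eb : b1 = b2.
  apply: val_inj; case: (ltngtP b1 b2) => // h.
  - have hj : (b1.+1 < n)%N by apply: leq_ltn_trans h (ltn_ord b2).
    have := R1 (Ordinal hj); rewrite Z2 /=; first by move=> H; have : false by apply: H.
    apply/andP; split => /=; lia.
  - have hj : (b2.+1 < n)%N by apply: leq_ltn_trans h (ltn_ord b1).
    have := R2 (Ordinal hj); rewrite Z1 /=; first by move=> H; have : false by apply: H.
    apply/andP; split => /=; lia.
by rewrite ea eb.
Qed.

Lemma key (k l : nat) (P : 'M[bool]_(k, l)) (c : 'I_l) (r0 : 'I_k)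
  (m n : nat) (M : 'M[bool]_(m,n)) (i : 'I_m) (ja jb x : 'I_n) :

  avoids P M -> M i x -> (ja < x)%N -> (x < jb)%N ->
  critical P (r0, c) M (i, ja) -> critical P (r0, c) M (i, jb) ->
  (forall q, P r0 q -> q = c) ->
  (forall R : bool -> 'I_k -> 'I_l -> nat, (forall s, mono (R s)) ->
     exists sigt, mono (fun p q => R (sigt p q) p q) /\
       forall (p : 'I_k) (q : 'I_l), (p < r0)%N -> P p q ->
         ((q < c)%N -> sigt p q) /\ ((c < q)%N -> ~~ sigt p q)) ->
  (forall R : bool -> 'I_k -> 'I_l -> nat, (forall s, mono (R s)) ->
     exists sigb, mono (fun p q => R (sigb p q) p q) /\
       forall (p : 'I_k) (q : 'I_l), (r0 < p)%N -> P p q ->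
         ((q < c)%N -> sigb p q) /\ ((c < q)%N -> ~~ sigb p q)) ->
  False.
Proof.
move=> Hav Mx hax hxb [_ [pa [Ea Pa]]] [_ [pb [Eb Pb]]] Hrow Top Bot.
pose R := fun s : bool => if s then pa else pb.
pose J := fun s : bool => if s then ja else jb.
have Hemb : forall s, is_embedding P (switch M (i, J s)) (R s) by case.
have HRe : forall s, R s r0 c = (i, J s) by case.
have Rm : forall s, mono (fun p q => (R s p q).1).
  by move=> s i1 i2 j1 j2 h; case: (Hemb s) => _ H _; exact: H.
have [st [Mt Ot]] := Top _ Rm.
have [sb [Mb Ob]] := Bot _ Rm.
apply: Hav.
apply: (@combine k l m n P M r0 c R i J x (fun p q => if (p < r0)%N then st p q else sb p q)) => //.
- move=> p q npr Hpq; case: (ltngtP p r0) => h.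
  + exact: Ot.
  + exact: Ob.
  + by move: npr; rewrite (val_inj h) eqxx.
- move=> i1 i2 j1 j2 h12 h2; rewrite (ltn_trans h12 h2) h2; exact: Mt.
- move=> i1 i2 j1 j2 h1 h12.
  have h2 := ltn_trans h1 h12.
  have f1 : (i1 < r0)%N = false by rewrite ltnNge (ltnW h1).
  have f2 : (i2 < r0)%N = false by rewrite ltnNge (ltnW h2).
  rewrite f1 f2; exact: Mb.
Qed.

Unset Implicit Arguments.

Theorem lemma3p11 (k l : nat) (P : 'M[bool]_(k, l)) (r1 r2 : 'I_k) (c : 'I_l) :
  (r1 <= r2)%N ->
  (forall (r : 'I_k) (j : 'I_l), (r1 <= r <= r2)%N -> P r j -> j = c) ->
  (* Type 1 *)
  ( ((forall (i : 'I_k) (j : 'I_l), (i < r1)%N -> P i j -> j = c \/ i.+1 = r1) /\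
     (forall (i : 'I_k) (j : 'I_l), (r2 < i)%N -> P i j -> j = c \/ i = r2.+1 :> nat))
  (* Type 2 *)
  \/ ((forall (i : 'I_k) (j : 'I_l), (i < r1)%N -> P i j -> j = c \/ i.+1 = r1) /\
      (forall (i : 'I_k) (j : 'I_l), (r2 < i)%N -> P i j -> (c <= j)%N))
  (* Type 3 *)
  \/ ((forall (i : 'I_k) (j : 'I_l), (i < r1)%N -> P i j -> (j <= c)%N) /\
      (forall (i : 'I_k) (j : 'I_l), (r2 < i)%N -> P i j -> (c <= j)%N)) ) ->
  forall r : 'I_k, (r1 <= r <= r2)%N -> P r c -> row_bounding P (r, c).
Proof.
move=> Hr12 Hmid Htypes r Hr Prc.
have Hrow : forall q, P r q -> q = c by move=> q; exact: Hmid r q Hr.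
have Top12 : (forall (i : 'I_k) (j : 'I_l), (i < r1)%N -> P i j -> j = c \/ i.+1 = r1) ->
  (forall R : bool -> 'I_k -> 'I_l -> nat, (forall s, mono (R s)) ->
     exists sigt, mono (fun p q => R (sigt p q) p q) /\
       forall (p : 'I_k) (q : 'I_l), (p < r)%N -> P p q ->
         ((q < c)%N -> sigt p q) /\ ((c < q)%N -> ~~ sigt p q)).
  move=> T R Rm.
  have hu : (r1.-1 < k)%N by apply: leq_ltn_trans (leq_pred _) (ltn_ord r1).
  have [s [Hu Hm]] := mixG c (Ordinal hu) (fun q => (q <= c)%N) Rm.
  exists s; split => // p q hp Hpq.
  case: (ltnP p r1) => h.
  - case: (T p q h Hpq) => [->|e]; first by rewrite ltnn.
    have -> : p = Ordinal hu by apply: val_inj => /=; lia.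
    by rewrite Hu; split => hq; [rewrite ltnW | rewrite -ltnNge].
  - have -> // := Hmid p q _ Hpq; first by rewrite ltnn.
    rewrite h /=; case/andP: Hr => _ H; exact: leq_trans (ltnW hp) H.
have Top3 : (forall (i : 'I_k) (j : 'I_l), (i < r1)%N -> P i j -> (j <= c)%N) ->
  (forall R : bool -> 'I_k -> 'I_l -> nat, (forall s, mono (R s)) ->
     exists sigt, mono (fun p q => R (sigt p q) p q) /\
       forall (p : 'I_k) (q : 'I_l), (p < r)%N -> P p q ->
         ((q < c)%N -> sigt p q) /\ ((c < q)%N -> ~~ sigt p q)).
  move=> T R Rm; exists (fun _ _ => true); split; first exact: Rm.
  move=> p q hp Hpq; split => // hq; exfalso.
  case: (ltnP p r1) => h.
  - have := T p q h Hpq; lia.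
  - have E := Hmid p q _ Hpq.
    have : q = c by apply: E; rewrite h /=; case/andP: Hr => _ H; exact: leq_trans (ltnW hp) H.
    move=> e; move: hq; rewrite e ltnn //.
have Bot1 : (forall (i : 'I_k) (j : 'I_l), (r2 < i)%N -> P i j -> j = c \/ i = r2.+1 :> nat) ->
  (forall R : bool -> 'I_k -> 'I_l -> nat, (forall s, mono (R s)) ->
     exists sigb, mono (fun p q => R (sigb p q) p q) /\
       forall (p : 'I_k) (q : 'I_l), (r < p)%N -> P p q ->
         ((q < c)%N -> sigb p q) /\ ((c < q)%N -> ~~ sigb p q)).
  move=> T R Rm.
  case: (ltnP r2.+1 k) => hd.
  - have [s [Hu Hm]] := mixG c (Ordinal hd) (fun q => (q <= c)%N) Rm.
    exists s; split => // p q hp Hpq.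
    case: (ltnP r2 p) => h.
    + case: (T p q h Hpq) => [->|e]; first by rewrite ltnn.
      have -> : p = Ordinal hd by apply: val_inj => /=; lia.
      by rewrite Hu; split => hq; [rewrite ltnW | rewrite -ltnNge].
    + have -> // := Hmid p q _ Hpq; first by rewrite ltnn.
      rewrite h andbT; case/andP: Hr => H _; exact: leq_trans H (ltnW hp).
  - exists (fun _ _ => false); split; first exact: Rm.
    move=> p q hp Hpq.
    have : q = c.
      apply: (Hmid p q _ Hpq); apply/andP; split.
      + case/andP: Hr => H _; exact: leq_trans H (ltnW hp).
      + have := ltn_ord p; lia.
    by move=> ->; rewrite ltnn.
have Bot23 : (forall (i : 'I_k) (j : 'I_l), (r2 < i)%N -> P i j -> (c <= j)%N) ->
  (forall R : bool -> 'I_k -> 'I_l -> nat, (forall s, mono (R s)) ->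
     exists sigb, mono (fun p q => R (sigb p q) p q) /\
       forall (p : 'I_k) (q : 'I_l), (r < p)%N -> P p q ->
         ((q < c)%N -> sigb p q) /\ ((c < q)%N -> ~~ sigb p q)).
  move=> T R Rm; exists (fun _ _ => false); split; first exact: Rm.
  move=> p q hp Hpq; split => // hq; exfalso.
  case: (ltnP r2 p) => h.
  - have := T p q h Hpq; lia.
  - have E := Hmid p q _ Hpq.
    have : q = c.
      apply: E; rewrite h andbT; case/andP: Hr => H _; exact: leq_trans H (ltnW hp).
    move=> e; move: hq; rewrite e ltnn //.
have [Top Bot] : (forall R : bool -> 'I_k -> 'I_l -> nat, (forall s, mono (R s)) ->
     exists sigt, mono (fun p q => R (sigt p q) p q) /\
       forall (p : 'I_k) (q : 'I_l), (p < r)%N -> P p q ->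
         ((q < c)%N -> sigt p q) /\ ((c < q)%N -> ~~ sigt p q)) /\
  (forall R : bool -> 'I_k -> 'I_l -> nat, (forall s, mono (R s)) ->
     exists sigb, mono (fun p q => R (sigb p q) p q) /\
       forall (p : 'I_k) (q : 'I_l), (r < p)%N -> P p q ->
         ((q < c)%N -> sigb p q) /\ ((c < q)%N -> ~~ sigb p q)).
  case: Htypes => [[A B]|[[A B]|[A B]]].
  - by split; [apply: Top12 | apply: Bot1].
  - by split; [apply: Top12 | apply: Bot23].
  - by split; [apply: Top3 | apply: Bot23].
exists 1 => m n M Hav i S HS.
rewrite leqNgt; apply/negP => /card_gt1P [[a1 b1] [[a2 b2] [in1 in2 ne]]].
have [Z1 [ja [hja cja]]] := HS _ in1.
have [Z2 [jb [hjb cjb]]] := HS _ in2.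
simpl in *.
have fin : forall (a1 b1 a2 b2 ja jb : 'I_n), zero_run M i a1 b1 -> zero_run M i a2 b2 ->
    (a1 <= ja <= b1)%N -> (a2 <= jb <= b2)%N ->
    critical P (r, c) M (i, ja) -> critical P (r, c) M (i, jb) -> (b1 < a2)%N -> False.
  move=> a1' b1' a2' b2' ja' jb' [_ _ _ R1] [_ Z _ _] h1 h2 ca cb hb.
  have hx : (b1'.+1 < n)%N by apply: leq_ltn_trans hb (ltn_ord a2').
  have Mx : M i (Ordinal hx) by apply: R1.
  have Mjb : M i jb' = false by case: cb.
  apply: (@key k l P c r m n M i ja' jb' (Ordinal hx)) => //=.
  - case/andP: h1 => _ H; exact: H.
  - rewrite ltn_neqAle; apply/andP; split.
    + apply/negP => /eqP E.
      have E' : Ordinal hx = jb' by apply: val_inj.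
      by move: Mx; rewrite E' Mjb.
    + case/andP: h2 => H _; exact: leq_trans hb H.
case: (runs_sep Z1 Z2 ne) => h.
- exact: (fin a1 b1 a2 b2 ja jb).
- exact: (fin a2 b2 a1 b1 jb ja).
Qed.
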